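(* Let $S$ be a compact, metrizable, separable space, let $A$ be the generator of a Feller semigroup on $C(S)$, and let $R_\lambda=(\lambda-A)^{-1}$, $\lambda>0$, be its resolvent. Suppose $(0,\infty)\ni\lambda\mapsto \ell_\lambda\in C(S)$ is locally bounded and satisfies $$(\lambda-\mu)R_\lambda \ell_\mu=\ell_\mu-\ell_\lambda,\qquad \lambda,\mu>0.$$ Then $\lambda\mapsto\ell_\lambda$ is infinitely differentiable (as a $C(S)$-valued map) and $$\ell_\lambda^{(n)}=(-1)^n n!\,(R_\lambda)^n\ell_\lambda,\qquad n\ge 1,\ \lambda>0.$$
   Context: $C(S)$ is the Banach space of real continuous functions on $S$ with the supremum norm. A Feller semigroup is a strongly continuous semigroup of positive contraction operators on $C(S)$ with $T(0)=I$; it need not be conservative (i.e. $T(t)1_S=1_S$ is not required). Its generator is $Af=\lim_{t\to0}t^{-1}(T(t)f-f)$ on the set of $f$ for which the limit exists in norm; the resolvent satisfies $\|\lambda R_\lambda\|\le 1$. *)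

(* Defs.v *)
(* C(S) is modelled as the continuous functions
   S -> R; norm statements are written out as uniform bounds (sup norm). *)
From HB Require Import structures.
From mathcomp Require Import all_boot all_order all_algebra.
From mathcomp Require Import all_classical all_reals all_analysis.
Set Implicit Arguments. Unset Strict Implicit. Unset Printing Implicit Defensive.
Import Order.TTheory GRing.Theory Num.Theory.
Import numFieldNormedType.Exports.
Local Open Scope classical_set_scope.
Local Open Scope ring_scope.

Section Feller.
Context {R : realType} {S : metricType R}.

(* (possibly nonlinear a priori) maps on real functions on S; only their
   behaviour on C(S) matters *)
Definition op := (S -> R) -> (S -> R).

(* Feller semigroup: strongly continuous semigroup of positive linear
   contractions on C(S) with T(0) = I (not necessarily conservative). *)
Definition feller_semigroup (T : R -> op) : Prop :=
  (forall t (f : S -> R), 0 <= t -> continuous f -> continuous (T t f)) /\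
      (forall t a (f g : S -> R), 0 <= t -> continuous f -> continuous g ->
         T t (fun x => a * f x + g x) = (fun x => a * T t f x + T t g x)) /\
      (forall t (f : S -> R), 0 <= t -> continuous f -> (forall x, 0 <= f x) ->
         forall x, 0 <= T t f x) /\
      (forall t (f : S -> R) c, 0 <= t -> continuous f -> (forall x, `|f x| <= c) ->
         forall x, `|T t f x| <= c) /\
      (forall f : S -> R, continuous f -> T 0 f = f) /\
      (forall s t (f : S -> R), 0 <= s -> 0 <= t -> continuous f ->
         T (s + t) f = T s (T t f)) /\
      (forall f : S -> R, continuous f -> forall t0, 0 <= t0 -> forall e, 0 < e ->
         exists2 d, 0 < d & forall t, 0 <= t -> `|t - t0| < d ->
           forall x, `|T t f x - T t0 f x| <= e).

(* graph of the generator: f \in D(A) and A f = g, i.e.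
   g = lim_{t -> 0+} (T t f - f)/t in sup norm *)
Definition gen_graph (T : R -> op) (f g : S -> R) : Prop :=
  [/\ continuous f, continuous g &
      forall e, 0 < e -> exists2 d, 0 < d & forall t, 0 < t -> t < d ->
        forall x, `|(T t f x - f x) / t - g x| <= e].

(* Rs l = (l - A)^{-1} for every l > 0 *)
Definition is_resolvent (T : R -> op) (Rs : R -> op) : Prop :=
  forall l, 0 < l ->
    (forall f : S -> R, continuous f ->
       gen_graph T (Rs l f) (fun x => l * Rs l f x - f x)) /\
    (forall g h, gen_graph T g h -> Rs l (fun x => l * g x - h x) = g).

Definition has_uderiv (F : R -> S -> R) (l : R) (G : S -> R) : Prop :=
  forall e, 0 < e -> exists2 d, 0 < d & forall h, h != 0 -> `|h| < d ->
    forall x, `|(F (l + h) x - F l x) / h - G x| <= e.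

Definition locally_bounded (L : R -> S -> R) : Prop :=
  forall l, 0 < l -> exists2 d, 0 < d & exists M, forall m, 0 < m ->
    `|m - l| < d -> forall x, `|L m x| <= M.

End Feller.

(* Main.v *)
Require Import Defs.
From HB Require Import structures.
From mathcomp Require Import all_boot all_order all_algebra.
From mathcomp Require Import all_classical all_reals all_analysis.
From mathcomp Require Import ring lra.
Import Order.TTheory GRing.Theory Num.Theory.
Import numFieldNormedType.Exports.
Local Open Scope classical_set_scope.
Local Open Scope ring_scope.
Set Implicit Arguments. Unset Strict Implicit. Unset Printing Implicit Defensive.


Lemma cont_lin (R : realType) (S : metricType R) (a : R) (f g : S -> R) :
  continuous f -> continuous g -> continuous (fun x => a * f x + g x).
Proof.
move=> hf hg x; apply: cvgD; last exact: hg.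
by apply: cvgMr; exact: hf.
Qed.

Lemma cont_bounded (R : realType) (S : metricType R) (f : S -> R) :
  compact [set: S] -> continuous f -> exists G, forall x, `|f x| <= G.
Proof.
move=> hS hf.
have [[x0 _]|hne] := pselect ([set: S] !=set0); last first.
  exists 0 => x; exfalso; apply: hne; by exists x.
have := @compact_EVT_max _ _ (fun x => `|f x|) [set: S] (ex_intro _ x0 I) hS.
case.
  apply: continuous_subspaceT => x.
  by apply: continuous_comp; [exact: hf| exact: norm_continuous].
move=> c _ hc; exists `|f c| => x; apply: hc; by rewrite in_setT.
Qed.

Lemma graph_lin (R : realType) (S : metricType R) (T : R -> op) a
  (g1 h1 g2 h2 : S -> R) : feller_semigroup T ->
  gen_graph T g1 h1 -> gen_graph T g2 h2 ->
  gen_graph T (fun x => a * g1 x + g2 x) (fun x => a * h1 x + h2 x).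
Proof.
move=> [_ [hlin _]] [cg1 ch1 H1] [cg2 ch2 H2].
split; [exact: cont_lin | exact: cont_lin |].
move=> e he.
set K := `|a| + 1.
have hK : 0 < K by rewrite /K ltr_pwDr.
have he2 : 0 < e / 2 by rewrite divr_gt0.
have heK : 0 < e / 2 / K by rewrite divr_gt0.
have [d1 hd1 D1] := H1 _ heK.
have [d2 hd2 D2] := H2 _ he2.
exists (Num.min d1 d2); first by rewrite lt_min hd1 hd2.
move=> t ht; rewrite lt_min => /andP[td1 td2] x.
rewrite (hlin _ _ _ _ (ltW ht) cg1 cg2).
have -> : (a * T t g1 x + T t g2 x - (a * g1 x + g2 x)) / t - (a * h1 x + h2 x)
   = a * ((T t g1 x - g1 x) / t - h1 x) + ((T t g2 x - g2 x) / t - h2 x).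
  by field; rewrite gt_eqF.
apply: (le_trans (ler_normD _ _)).
rewrite normrM.
have := D1 t ht td1 x; have := D2 t ht td2 x => b2 b1.
apply: (@le_trans _ _ (`|a| * (e / 2 / K) + e / 2)).
  by apply: lerD => //; apply: ler_wpM2l.
have : `|a| * (e / 2 / K) <= e / 2.
  by rewrite mulrA ler_pdivrMr // mulrC; apply: ler_wpM2l; [lra|]; rewrite /K; lra.
move=> hh.
lra.
Qed.

Lemma Rs_cont (R : realType) (S : metricType R) (T : R -> op) (Rs : R -> op) m
  (f : S -> R) : is_resolvent T Rs -> 0 < m -> continuous f -> continuous (Rs m f).
Proof. by move=> hR hm hf; case: ((hR m hm).1 f hf). Qed.

Lemma Rs_lin (R : realType) (S : metricType R) (T : R -> op) (Rs : R -> op) m a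
  (f g : S -> R) : feller_semigroup T -> is_resolvent T Rs -> 0 < m ->
  continuous f -> continuous g ->
  Rs m (fun x => a * f x + g x) = (fun x => a * Rs m f x + Rs m g x).
Proof.
move=> hT hR hm hf hg.
have G1 := (hR m hm).1 f hf; have G2 := (hR m hm).1 g hg.
have := (hR m hm).2 _ _ (graph_lin a hT G1 G2).
have -> : (fun x => m * (a * Rs m f x + Rs m g x) -
     (a * (m * Rs m f x - f x) + (m * Rs m g x - g x))) = (fun x => a * f x + g x).
  by apply: funext => x; ring.
by [].
Qed.

Lemma Rs_sub (R : realType) (S : metricType R) (T : R -> op) (Rs : R -> op) m
  (f g : S -> R) : feller_semigroup T -> is_resolvent T Rs -> 0 < m ->
  continuous f -> continuous g ->
  Rs m (fun x => f x - g x) = (fun x => Rs m f x - Rs m g x).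
Proof.
move=> hT hR hm hf hg.
have := Rs_lin (-1) hT hR hm hg hf.
have -> : (fun x => -1 * g x + f x) = (fun x => f x - g x).
  by apply: funext => x; ring.
move=> ->; apply: funext => x; ring.
Qed.

Lemma Rs_bound (R : realType) (S : metricType R) (T : R -> op) (Rs : R -> op) m
  (f : S -> R) c : compact [set: S] -> feller_semigroup T -> is_resolvent T Rs ->
  0 < m -> continuous f -> (forall x, `|f x| <= c) ->
  forall x, `|Rs m f x| <= c / m.
Proof.
move=> hS hT hR hm hf hc x.
have hg := Rs_cont hR hm hf.
set g := Rs m f in hg *.
have := @compact_EVT_max _ _ (fun x => `|g x|) [set: S] (ex_intro _ x I) hS.
case.
  apply: continuous_subspaceT => y.
  by apply: continuous_comp; [exact: hg| exact: norm_continuous].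
move=> x0 _ hx0.
have hM : forall y, `|g y| <= `|g x0| by move=> y; apply: hx0; rewrite in_setT.
suff : m * `|g x0| <= c.
  move=> h; apply: (le_trans (hM x)); by rewrite ler_pdivlMr // mulrC.
apply/ler_addgt0Pr => eps heps.
case: ((hR m hm).1 f hf) => _ _ H.
have [d hd D] := H _ heps.
set t := d / 2.
have ht : 0 < t by rewrite /t divr_gt0.
have htd : t < d by rewrite /t; lra.
have := D t ht htd x0.
case: hT => [_ [_ [_ [hcontr _]]]].
have hu := hcontr t g `|g x0| (ltW ht) hg hM x0.
have hw := hc x0.
rewrite -/g => herr.
set u := T t g x0 in hu herr.
set v := g x0 in hu herr hw *.
set w := f x0 in hw herr.
set err := (u - v) / t - (m * v - w) in herr.
have e1 : (1 + t * m) * v = u + t * w - t * err.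
  by rewrite /err; field; rewrite gt_eqF.
have e2 : `|(1 + t * m) * v| <= `|u| + t * `|w| + t * `|err|.
  rewrite e1; apply: (le_trans (ler_normB _ _)).
  rewrite [`|t * err|]normrM (gtr0_norm ht); apply: lerD => //.
  apply: (le_trans (ler_normD _ _)); by rewrite normrM (gtr0_norm ht).
have h1 : 0 < 1 + t * m.
  have : 0 < t * m by rewrite mulr_gt0.
  lra.
rewrite normrM (gtr0_norm h1) in e2.
have e3 : t * `|w| <= t * c by rewrite ler_pM2l.
have e4 : t * `|err| <= t * eps by rewrite ler_pM2l.
have e5 : t * (m * `|v|) <= t * (c + eps).
  have : (1 + t * m) * `|v| <= `|v| + t * c + t * eps.
    apply: (le_trans e2); lra.
  move=> h; rewrite mulrDr; lra.
by rewrite ler_pM2l in e5.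
Qed.

Lemma cont_sub (R : realType) (S : metricType R) (f g : S -> R) :
  continuous f -> continuous g -> continuous (fun x => f x - g x).
Proof. by move=> hf hg x; apply: cvgB; [exact: hf|exact: hg]. Qed.

Lemma cont_scale (R : realType) (S : metricType R) a (f : S -> R) :
  continuous f -> continuous (fun x => a * f x).
Proof. by move=> hf x; apply: cvgMr; exact: hf. Qed.

Lemma Rs_scale (R : realType) (S : metricType R) (T : R -> op) (Rs : R -> op) m a
  (f : S -> R) : compact [set: S] -> feller_semigroup T -> is_resolvent T Rs -> 0 < m ->
  continuous f -> Rs m (fun x => a * f x) = (fun x => a * Rs m f x).
Proof.
move=> hS hT hR hm hf.
have h0 : continuous (fun _ : S => (0 : R)) by move=> x; exact: cvg_cst.
have := Rs_lin a hT hR hm hf h0.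
have -> : (fun x => a * f x + 0) = (fun x => a * f x) by apply: funext => x; ring.
move=> ->; apply: funext => x.
have : `|Rs m (fun _ : S => 0) x| <= 0 / m.
  by apply: (Rs_bound hS hT hR hm h0) => y; rewrite normr0.
rewrite mul0r normr_le0 => /eqP ->; ring.
Qed.

Lemma Rs_RI (R : realType) (S : metricType R) (T : R -> op) (Rs : R -> op) l m
  (f : S -> R) : feller_semigroup T -> is_resolvent T Rs -> 0 < l -> 0 < m ->
  continuous f -> forall x, Rs m f x - Rs l f x = (l - m) * Rs m (Rs l f) x.
Proof.
move=> hT hR hl hm hf x.
have G := (hR l hl).1 f hf.
have E := (hR m hm).2 _ _ G.
have e1 : (fun x => m * Rs l f x - (l * Rs l f x - f x)) =
          (fun x => (m - l) * Rs l f x + f x) by apply: funext => y; ring.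
rewrite e1 (Rs_lin _ hT hR hm (Rs_cont hR hl hf) hf) in E.
have := congr1 (fun F => F x) E => /= <-; ring.
Qed.

Lemma small_lin (R : realType) (C d0 e : R) : 0 < d0 -> 0 < e ->
  exists2 d : R, 0 < d & d <= d0 /\ forall h : R, `|h| < d -> C * `|h| <= e.
Proof.
move=> hd0 he.
have hK : 0 < `|C| + 1 by rewrite ltr_pwDr.
exists (Num.min d0 (e / (`|C| + 1))).
  by rewrite lt_min hd0 divr_gt0.
split; first by rewrite ge_min lexx.
move=> h; rewrite lt_min => /andP[_].
rewrite ltr_pdivlMr // => hh.
have hC : C <= `|C| := ler_norm C.
have hn : 0 <= `|h| := normr_ge0 h.
have hCn : 0 <= `|C| := normr_ge0 C.
nra.
Qed.

Lemma inv_half (R : realType) (c l h : R) : 0 <= c -> 0 < l -> `|h| < l / 2 ->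
  c / (l + h) <= c * (2 / l).
Proof.
move=> hc hl hh.
have hh' : - (l / 2) < h /\ h < l / 2.
  by split; move: hh; rewrite ltr_norml => /andP[].
have hlh : 0 < l + h by lra.
rewrite ler_pdivrMr //.
have -> : c * (2 / l) * (l + h) = c * ((2 * l + 2 * h) / l).
  by field; rewrite gt_eqF.
rewrite -[X in X <= _]mulr1; apply: ler_wpM2l => //.
rewrite ler_pdivlMr // mul1r; lra.
Qed.

Lemma iter_cont (R : realType) (S : metricType R) (T : R -> op) (Rs : R -> op)
  (L : R -> S -> R) m k : is_resolvent T Rs -> 0 < m -> continuous (L m) ->
  continuous (iter k (Rs m) (L m)).
Proof.
move=> hR hm hL; elim: k => [|k IH] //=.
exact: (Rs_cont hR hm IH).
Qed.

Lemma claim (R : realType) (S : metricType R) (T : R -> op) (Rs : R -> op)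
  (L : R -> S -> R) (l : R) :
  compact [set: S] -> feller_semigroup T -> is_resolvent T Rs ->
  (forall m, 0 < m -> continuous (L m)) ->
  locally_bounded L ->
  (forall l m, 0 < l -> 0 < m ->
     (fun x => (l - m) * Rs l (L m) x) = (fun x => L m x - L l x)) ->
  0 < l -> forall k (e : R), 0 < e -> exists2 d : R, 0 < d & forall h : R, h != 0 ->
   `|h| < d -> forall x,
   `|(iter k (Rs (l + h)) (L (l + h)) x - iter k (Rs l) (L l) x) / h
      + k.+1%:R * iter k.+1 (Rs l) (L l) x| <= e.
Proof.
move=> hS hT hR hLc hLb hid hl.
have hl2 : 0 < l / 2 by rewrite divr_gt0.
have posh : forall h : R, `|h| < l / 2 -> 0 < l + h.
  move=> h; rewrite ltr_norml => /andP[h1 h2]; lra.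
elim=> [|k IH] e he.
-
  have [dL hdL [M HM]] := hLb l hl.
  have hd0 : 0 < Num.min (l / 2) dL by rewrite lt_min hl2 hdL.
  have [d hd [hdd0 Hd]] := small_lin (M / l / l) hd0 he.
  exists d => // h hh0 hhd x.
  have hhd' : `|h| < Num.min (l / 2) dL by apply: lt_le_trans hhd hdd0.
  move: hhd'; rewrite lt_min => /andP[hh2 hhL].
  have hlh := posh h hh2.
  have hLlh := hLc _ hlh.
  have hLl := hLc _ hl.
  have id1 := hid l (l + h) hl hlh.
  have eq1 : forall y, L l y - L (l + h) y = h * Rs l (L (l + h)) y.
    move=> y; have := congr1 (fun F => F y) id1 => /= E.
    have E' : L (l + h) y - L l y = - (h * Rs l (L (l + h)) y) by rewrite -E; ring.
    lra.
  have bd1 : forall y, `|Rs l (L (l + h)) y| <= M / l.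
    apply: (Rs_bound hS hT hR hl hLlh) => y; apply: HM => //.
    by rewrite addrAC subrr add0r.
  have bd2 : forall y, `|L l y - L (l + h) y| <= `|h| * (M / l).
    move=> y; rewrite eq1 normrM; apply: ler_wpM2l => //.
  have bd3 := Rs_bound hS hT hR hl (cont_sub hLl hLlh) bd2 x.
  rewrite (Rs_sub hT hR hl hLl hLlh) in bd3.
  have -> : (iter 0 (Rs (l + h)) (L (l + h)) x - iter 0 (Rs l) (L l) x) / h +
      0.+1%:R * iter 1 (Rs l) (L l) x = Rs l (L l) x - Rs l (L (l + h)) x.
    rewrite /= (_ : L (l + h) x = L l x - h * Rs l (L (l + h)) x); last first.
      by have := eq1 x; lra.
    by field.
  apply: (le_trans bd3).
  have -> : `|h| * (M / l) / l = M / l / l * `|h|.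
    by ring.
  exact: Hd.
-
  set P0 := iter k (Rs l) (L l).
  set g := iter k.+1 (Rs l) (L l).
  have hP0 : continuous P0 := iter_cont hR hl (hLc _ hl).
  have hg : continuous g := iter_cont hR hl (hLc _ hl).
  have [G HG] := cont_bounded hS hg.
  have hRg : continuous (Rs l g) := Rs_cont hR hl hg.
  have he' : 0 < e * l / 4 by rewrite !divr_gt0 ?mulr_gt0.
  have [d1 hd1 D1] := IH _ he'.
  have he2 : 0 < e / 2 by rewrite divr_gt0.
  have [d2 hd2 [hd2l Hd2]] := small_lin (k.+2%:R * (G / l * (2 / l))) hl2 he2.
  exists (Num.min d1 d2); first by rewrite lt_min hd1 hd2.
  move=> h hh0; rewrite lt_min => /andP[hhd1 hhd2] x.
  have hh2 : `|h| < l / 2 by apply: lt_le_trans hhd2 hd2l.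
  have hlh := posh h hh2.
  set Pk := iter k (Rs (l + h)) (L (l + h)).
  have hPk : continuous Pk := iter_cont hR hlh (hLc _ hlh).
  set E := fun y => h^-1 * (Pk y - P0 y) + k.+1%:R * g y.
  have hD : continuous (fun y => Pk y - P0 y) by exact: cont_sub.
  have hkg : continuous (fun y => k.+1%:R * g y) by exact: cont_scale.
  have hE : continuous E by exact: cont_lin.
  have bE : forall y, `|E y| <= e * l / 4.
    by move=> y; rewrite /E mulrC; apply: D1.
  have bRE := Rs_bound hS hT hR hlh hE bE x.
  have RE : Rs (l + h) E x = h^-1 * (Rs (l + h) Pk x - Rs (l + h) P0 x)
      + k.+1%:R * Rs (l + h) g x.
    rewrite /E (Rs_lin _ hT hR hlh hD hkg) (Rs_sub hT hR hlh hPk hP0).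
    by rewrite (Rs_scale _ hS hT hR hlh hg).
  have RI1 := Rs_RI hT hR hl hlh hP0 x.
  have RI2 := Rs_RI hT hR hl hlh hg x.
  have bRg : forall y, `|Rs l g y| <= G / l by exact: (Rs_bound hS hT hR hl hg).
  have bw := Rs_bound hS hT hR hlh hRg bRg x.
  have hG : 0 <= G by apply: le_trans (HG x).
  have bw' : `|Rs (l + h) (Rs l g) x| <= G / l * (2 / l).
    apply: (le_trans bw); apply: inv_half => //; exact: divr_ge0 (ltW hl).
  have bRE' : `|Rs (l + h) E x| <= e / 2.
    apply: (le_trans bRE).
    apply: (@le_trans _ _ (e * l / 4 * (2 / l))).
      by apply: inv_half => //; exact: ltW.
    have hl0 : l != 0 by rewrite gt_eqF.
    rewrite le_eqVlt; apply/orP; left; apply/eqP; field; exact: hl0.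
  rewrite !iterS -/P0 -/g -/Pk.
  have -> : (Rs (l + h) Pk x - Rs l P0 x) / h + k.+2%:R * Rs l g x =
      Rs (l + h) E x + k.+2%:R * h * Rs (l + h) (Rs l g) x.
    rewrite RE.
    rewrite (_ : Rs l P0 x = g x) // (mulrS 1 k.+1).
    have RI1' : Rs (l + h) P0 x - g x = (l - (l + h)) * Rs (l + h) g x := RI1.
    have hb : Rs (l + h) P0 x = g x + (l - (l + h)) * Rs (l + h) g x by lra.
    have hu : Rs (l + h) g x = Rs l g x + (l - (l + h)) * Rs (l + h) (Rs l g) x.
      by lra.
    rewrite hb hu; field; exact: hh0.
  apply: (le_trans (ler_normD _ _)).
  have b2 : `|k.+2%:R * h * Rs (l + h) (Rs l g) x| <= e / 2.
    rewrite -mulrA normrM normrM (ger0_norm (ler0n _ _)).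
    apply: (@le_trans _ _ (k.+2%:R * (`|h| * (G / l * (2 / l))))).
      by apply: ler_wpM2l => //; apply: ler_wpM2l.
    rewrite [`|h| * _]mulrC mulrA; exact: Hd2.
  lra.
Qed.
Unset Implicit Arguments.
Theorem proposition1 (R : realType) (S : metricType R)
  (T : R -> op) (Rs : R -> op) (L : R -> S -> R) :
  compact [set: S] ->
  (exists D : set S, countable D /\ dense D) ->
  feller_semigroup T ->
  is_resolvent T Rs ->
  (forall m, 0 < m -> continuous (L m)) ->
  locally_bounded L ->
  (forall l m, 0 < l -> 0 < m ->
     (fun x => (l - m) * Rs l (L m) x) = (fun x => L m x - L l x)) ->
  forall (n : nat) (l : R), 0 < l ->
    has_uderiv
      (fun m x => (-1) ^+ n * n`!%:R * iter n (Rs m) (L m) x) l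
      (fun x => (-1) ^+ n.+1 * n.+1`!%:R * iter n.+1 (Rs l) (L l) x).
Proof.
move=> hS _ hT hR hLc hLb hid n l hl e he.
have hn : 0 < n`!%:R :> R by rewrite ltr0n fact_gt0.
have [d hd D] := claim hS hT hR hLc hLb hid hl n (divr_gt0 he hn).
exists d => // h hh0 hhd x /=.
have := D h hh0 hhd x.
have -> : ((-1) ^+ n * n`!%:R * iter n (Rs (l + h)) (L (l + h)) x -
     (-1) ^+ n * n`!%:R * iter n (Rs l) (L l) x) / h -
     (-1) ^+ n.+1 * n.+1`!%:R * iter n.+1 (Rs l) (L l) x =
   ((-1) ^+ n * n`!%:R) *
   ((iter n (Rs (l + h)) (L (l + h)) x - iter n (Rs l) (L l) x) / h +
      n.+1%:R * iter n.+1 (Rs l) (L l) x).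
  rewrite exprS factS natrM; field; exact: hh0.
rewrite normrM normrM normrX normrN1 expr1n mul1r (gtr0_norm hn) => H.
by rewrite mulrC -ler_pdivlMr.
Qed.
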